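(* Let $G=(V,E)$ be a hypergraph, let $(V_1,\dots,V_k)$ be a maximal minimum $k$-partition in $G$ for an integer $k\ge2$, and let $S\subseteq V_1$ and $T\subseteq V\setminus V_1$ be such that $T\cap V_j\ne\emptyset$ for every $j\in\{2,\dots,k\}$. If $(U,\overline U)$ is a minimum $(S,T)$-terminal cut, then $U\subseteq V_1$.
   Context: A hypergraph $G=(V,E)$ has finite vertex set $V$ and finite multiset $E$ of unit-cost hyperedges (subsets of $V$). For $X\subseteq V$, $\overline X=V\setminus X$ and $d(X)$ is the number of hyperedges meeting both $X$ and $\overline X$. For an (ordered) partition of $V$ into $k$ non-empty parts, its cost is the number of hyperedges meeting at least two parts; a minimum $k$-partition has minimum cost; a minimum $k$-partition $(V_1,\dots,V_k)$ is a maximal minimum $k$-partition if there is no minimum $k$-partition $(V_1',\dots,V_k')$ with $V_1\subsetneq V_1'$. For disjoint $S,T\subseteq V$, a 2-partition $(U,\overline U)$ is an $(S,T)$-terminal cut if $S\subseteq U\subseteq V\setminus T$, and it is minimum if $d(U)$ is minimum among such cuts. *)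

(* Defs.v *)
From mathcomp Require Import all_boot.
Set Implicit Arguments. Unset Strict Implicit. Unset Printing Implicit Defensive.

Definition hypergraph (V : finType) := seq {set V}.

Definition cut_val (V : finType) (E : hypergraph V) (X : {set V}) : nat :=
  count (fun e : {set V} => (e :&: X != set0) && (e :&: ~: X != set0)) E.

(* Ordered k-partition of V into non-empty parts (indexed by 'I_k;
   index 0 is the first part V_1). *)
Definition is_kpartition (V : finType) (k : nat) (P : 'I_k -> {set V}) : Prop :=
  (forall i, P i != set0) /\
  (forall i j, i != j -> [disjoint P i & P j]) /\
  (forall x : V, exists i, x \in P i).

Definition part_cost (V : finType) (E : hypergraph V) (k : nat)
  (P : 'I_k -> {set V}) : nat :=
  count (fun e : {set V} =>
    [exists i : 'I_k, exists j : 'I_k,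
       [&& i != j, e :&: P i != set0 & e :&: P j != set0]]) E.

Definition is_min_kpartition (V : finType) (E : hypergraph V) (k : nat)
  (P : 'I_k -> {set V}) : Prop :=
  is_kpartition P /\
  forall Q : 'I_k -> {set V}, is_kpartition Q -> part_cost E P <= part_cost E Q.

(* the first part V_1 (the part with index 0; empty if k = 0) *)
Definition first_part (V : finType) (k : nat) (P : 'I_k -> {set V}) : {set V} :=
  [set x | [exists i : 'I_k, (val i == 0) && (x \in P i)]].

Definition is_maximal_min_kpartition (V : finType) (E : hypergraph V) (k : nat)
  (P : 'I_k -> {set V}) : Prop :=
  is_min_kpartition E P /\
  ~ (exists Q : 'I_k -> {set V},
        is_min_kpartition E Q /\ first_part P \proper first_part Q).

Definition is_terminal_cut (V : finType) (S T U : {set V}) : Prop :=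
  S \subset U /\ U \subset ~: T.

Definition is_min_terminal_cut (V : finType) (E : hypergraph V)
  (S T U : {set V}) : Prop :=
  is_terminal_cut S T U /\
  forall U' : {set V}, is_terminal_cut S T U' -> cut_val E U <= cut_val E U'.

(* Main.v *)
Require Import Defs.
From mathcomp Require Import all_boot.
Set Implicit Arguments. Unset Strict Implicit. Unset Printing Implicit Defensive.

Definition fcost (V : finType) k (E : hypergraph V) (f : V -> 'I_k) :=
  count (fun e : {set V} => [exists x in e, exists y in e, f x != f y]) E.

Lemma part_cost_f (V : finType) (E : hypergraph V) k (P : 'I_k -> {set V})
  (f : V -> 'I_k) :
  (forall x i, (x \in P i) = (f x == i)) -> part_cost E P = fcost E f.
Proof.
move=> Hf; apply: eq_count => e.
apply/existsP/existsP.
- case=> i /existsP [j /and3P [nij /set0Pn [x /setIP [xe xi]] /set0Pn [y /setIP [ye yj]]]].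
  exists x; rewrite xe /=; apply/existsP; exists y; rewrite ye /=.
  by rewrite Hf in xi; rewrite Hf in yj; rewrite (eqP xi) (eqP yj).
- case=> x /andP [xe /existsP [y /andP [ye nxy]]].
  exists (f x); apply/existsP; exists (f y); rewrite nxy /=.
  by apply/andP; split; [apply/set0Pn; exists x | apply/set0Pn; exists y]; rewrite inE ?xe ?ye Hf eqxx.
Qed.

Lemma first_part_f (V : finType) k (P : 'I_k -> {set V}) (f : V -> 'I_k) (i0 : 'I_k) :
  (forall x i, (x \in P i) = (f x == i)) -> val i0 = 0 ->
  first_part P = [set x | f x == i0].
Proof.
move=> Hf v0; apply/setP => x; rewrite !inE; apply/existsP/idP.
- case=> i /andP [/eqP iv xi].
  have -> : i0 = i by apply: val_inj; rewrite v0 iv.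
  by rewrite -Hf.
- by move=> h; exists i0; rewrite v0 eqxx Hf.
Qed.

Lemma bool4 (n a o c : bool) :
  (n -> a -> c) -> (n -> a -> o) -> (n -> o || c) -> (a -> o || c) -> n + a <= o + c.
Proof. by case: n; case: a; case: o; case: c => //= H1 H2 H3 H4; auto. Qed.

Lemma edge_ineq (V : finType) k (p : V -> 'I_k) (i0 : 'I_k) (U : {set V}) (e : {set V}) :
  [exists x in e, exists y in e, (fun x => if x \in U then i0 else p x) x
       != (fun x => if x \in U then i0 else p x) y]
  + ((e :&: (U :&: [set x | p x == i0]) != set0)
     && (e :&: ~: (U :&: [set x | p x == i0]) != set0))
  <= [exists x in e, exists y in e, p x != p y]
   + ((e :&: U != set0) && (e :&: ~: U != set0)).
Proof.
apply: bool4.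
- case/existsP => x /andP [xe /existsP [y /andP [ye /= nq]]].
  case/andP => /set0Pn [z /setIP [ze /setIP [zU _]]] _.
  apply/andP; split; first by apply/set0Pn; exists z; rewrite inE ze.
  apply/set0Pn.
  case: (boolP (x \in U)) => xU; last by exists x; rewrite !inE xe xU.
  case: (boolP (y \in U)) => yU; last by exists y; rewrite !inE ye yU.
  by move: nq; rewrite xU yU eqxx.
- case/existsP => x /andP [xe /existsP [y /andP [ye /= nq]]].
  case/andP => /set0Pn [z /setIP [ze /setIP [zU]]]; rewrite inE => /eqP pz _.
  case: (eqVneq (p x) (p z)) => [ex|nx].
    case: (eqVneq (p y) (p z)) => [ey|ny].
      by move: nq; rewrite ex ey pz; case: (x \in U); case: (y \in U); rewrite eqxx.
    apply/existsP; exists y; rewrite ye /=; apply/existsP; exists z; by rewrite ze.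
  apply/existsP; exists x; rewrite xe /=; apply/existsP; exists z; by rewrite ze.
- case/existsP => x /andP [xe /existsP [y /andP [ye /= nq]]].
  case: (eqVneq (p x) (p y)) => [exy|nxy]; last first.
    apply/orP; left; apply/existsP; exists x; rewrite xe /=; apply/existsP; exists y; by rewrite ye.
  apply/orP; right.
  case: (boolP (x \in U)) => xU; case: (boolP (y \in U)) => yU.
  + by move: nq; rewrite xU yU eqxx.
  + by apply/andP; split; [apply/set0Pn; exists x | apply/set0Pn; exists y]; rewrite !inE ?xe ?ye ?xU ?yU.
  + by apply/andP; split; [apply/set0Pn; exists y | apply/set0Pn; exists x]; rewrite !inE ?xe ?ye ?xU ?yU.
  + by move: nq; rewrite (negbTE xU) (negbTE yU) exy eqxx.
- case/andP => /set0Pn [z /setIP [ze /setIP [zU]]]; rewrite inE => /eqP pz.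
  case/set0Pn => y /setIP [ye]; rewrite !inE negb_and => /orP [yU|yW].
    by apply/orP; right; apply/andP; split; [apply/set0Pn; exists z | apply/set0Pn; exists y]; rewrite !inE ?ze ?ye ?zU.
  apply/orP; left; apply/existsP; exists y; rewrite ye /=; apply/existsP; exists z.
  by rewrite ze pz.
Qed.

Lemma count_ineq (T : Type) (s : seq T) (f g h l : pred T) :
  (forall x, f x + g x <= h x + l x) ->
  count f s + count g s <= count h s + count l s.
Proof.
move=> H; elim: s => //= x s IH.
by rewrite addnACA [X in _ <= X]addnACA; apply: leq_add.
Qed.

Theorem lemma4p1 (V : finType) (E : hypergraph V) (k : nat)
  (P : 'I_k -> {set V}) (S T U : {set V}) :
  2 <= k ->
  is_maximal_min_kpartition E P ->
  S \subset first_part P ->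
  T \subset ~: first_part P ->
  (forall j : 'I_k, 1 <= val j -> T :&: P j != set0) ->
  is_min_terminal_cut E S T U ->
  U \subset first_part P.
Proof.
move=> k2 [[Pk Pmin] Pmax] SW TW TP [[SU UT] Umin].
have k0 : 0 < k by apply: leq_trans k2.
pose i0 := Ordinal k0.
have [Pne [Pdis Pcov]] := Pk.
pose p x := odflt i0 [pick i | x \in P i].
have pP : forall x i, (x \in P i) = (p x == i).
  move=> x i; rewrite /p; case: pickP => [j xj|none] /=.
    apply/idP/eqP => [xi|<-//]; apply/eqP; apply: contraT => nji.
    by rewrite (disjointFr (Pdis _ _ nji) xj) in xi.
  by case: (Pcov x) => j xj; rewrite none in xj.
have W_eq := first_part_f pP (erefl : val i0 = 0).
rewrite W_eq in SW TW *.
apply/idPn => nUW.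
pose q x := if x \in U then i0 else p x.
pose Q i := [set x | q x == i].
have QP : forall x i, (x \in Q i) = (q x == i) by move=> x i; rewrite inE.
have Qk : is_kpartition Q.
  split; [|split].
  - move=> i; apply/set0Pn; case: (eqVneq i i0) => [->|ni].
      have /set0Pn [x xP] := Pne i0; rewrite pP in xP; exists x.
      by rewrite inE /q; case: (x \in U).
    have h : 1 <= val i.
      rewrite lt0n; apply: contra ni => /eqP h; apply/eqP/val_inj; by rewrite h.
    have /set0Pn [x /setIP [xT xi]] := TP i h; exists x.
    have xU : x \notin U.
      apply/negP => xU; have := subsetP UT x xU; by rewrite inE xT.
    by rewrite inE /q (negbTE xU) -pP.
  - move=> i j nij; rewrite -setI_eq0; apply/eqP/setP => x; rewrite !inE.
    apply/negP => /andP [/eqP xi /eqP xj]; by rewrite -xi -xj eqxx in nij.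
  - by move=> x; exists (q x); rewrite inE.
have costQ : part_cost E Q <= part_cost E P.
  rewrite (part_cost_f E QP) (part_cost_f E pP).
  have UW : cut_val E U <= cut_val E (U :&: [set x | p x == i0]).
    apply: Umin; split; first by rewrite subsetI SU SW.
    by apply: subset_trans UT; apply: subsetIl.
  have := count_ineq E (edge_ineq p i0 U).
  rewrite /fcost /cut_val -/(q) => H.
  rewrite -(leq_add2r (cut_val E (U :&: [set x | p x == i0]))).
  apply: leq_trans H _; rewrite leq_add2l; exact: UW.
apply: Pmax; exists Q; split.
  split => // R Rk; exact: leq_trans costQ (Pmin R Rk).
rewrite W_eq (first_part_f QP (erefl : val i0 = 0)) properE; apply/andP; split.
  by apply/subsetP => x; rewrite !inE /q => /eqP ->; case: (x \in U).
apply: contra nUW => h; apply: subset_trans h; apply/subsetP => x xU.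
by rewrite inE /q xU.
Qed.
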